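(* Let $\gamma\in(0,2/f_{\max})$. The map $\mathcal Z:\mathbb S_c^{N\times N}\to\mathbb S_c^{N\times N}$, $\mathcal Z(\tilde h)=\mathcal Q\big(\gamma(\tilde X_R+j\tilde X_I)+\tilde h-\gamma(\mathcal F(\tilde h_R)+j\mathcal F(\tilde h_I)-\tfrac{1+j}{2})\big)$, is a contraction on the set of complex matrices in $\mathbb S_c^{N\times N}$ with respect to the Frobenius distance.
   Context: $M,N$ positive integers with $N>2M$; $g$ is a real $M\times M$ image with values in $[0,255]$ zero-padded to $N\times N$, $\tilde g=\tilde g_R+j\tilde g_I$ its $N\times N$ 2D-DFT $\mathfrak F(g)$; $\tilde X_R=\mathbb 1(\tilde g_R+W_R+d_R>0)-\tfrac12$, $\tilde X_I=\mathbb 1(\tilde g_I+W_I+d_I>0)-\tfrac12$ entrywise, where $W_R,W_I$ are independent zero-mean noise of known distribution symmetric about $0$ and $d_R,d_I$ independent AWGN dither, ensuring the total noise density is positive on the signal range. $\mathcal F$ is the CDF and $f$ the PDF of the total noise, applied entrywise; $f_{\max}$ is the maximum of $f$ over the region within the bounds of the signal. $\tilde h_R,\tilde h_I$ are the real and imaginary parts of $\tilde h$. $\mathbb S_c=\{a+jb:a,b\in[-255N^2,255N^2]\}$. $\mathcal Q(\tilde h)=\mathfrak F(\textsc{Clip}(\textsc{Proj}(\mathfrak F^{-1}(\tilde h))))$, where $\textsc{Proj}$ zeroes spatial-domain pixels outside the $M^2$-pixel image block and $\textsc{Clip}$ clips pixel values to $[0,255]$. *)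

(* Defs.v *)
From HB Require Import structures.
From mathcomp Require Import all_boot all_order all_algebra.
From mathcomp Require Import all_classical all_reals all_analysis.
From mathcomp Require Import complex.
Set Implicit Arguments. Unset Strict Implicit. Unset Printing Implicit Defensive.
Import Order.TTheory GRing.Theory Num.Theory.
Local Open Scope ring_scope.

Section OneBitDefs.
Context {R : realType}.
Local Notation C := R[i].
Local Notation Re := (@complex.Re _).
Local Notation Im := (@complex.Im _).

(* W ~ mu (a probability distribution on R, symmetric about 0, zero mean),
   d ~ N(0, sigma^2) independent AWGN dither.  The total noise W + d has
   density  f(x) = \int mu(dw) phi_sigma(x - w)  and CDF F(x) = \int_{-oo}^x f. *)
Definition symmetric_distribution (mu : probability R R) : Prop :=
  forall A : set R, measurable A -> mu ((fun x => - x) @` A)%classic = mu A.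

Definition zero_mean (mu : probability R R) : Prop :=
  mu.-integrable setT (fun x => x%:E) /\ (\int[mu]_x x%:E = 0)%E.

Definition noise_pdf (mu : probability R R) (sigma : R) (x : R) : R :=
  fine (\int[mu]_w (normal_pdf 0 sigma (x - w))%:E)%E.

Definition noise_cdf (mu : probability R R) (sigma : R) (x : R) : R :=
  fine (\int[lebesgue_measure]_(t in `]-oo, x]%classic) (noise_pdf mu sigma t)%:E)%E.

Definition sig_bound (N : nat) : R := 255 * (N%:R ^+ 2).

Definition f_max (mu : probability R R) (sigma : R) (N : nat) : R :=
  sup [set noise_pdf mu sigma x | x in `[- sig_bound N, sig_bound N]%classic].

Definition twiddle (N t : nat) : C :=
  Complex (cos (2 * pi * t%:R / N%:R)) (- sin (2 * pi * t%:R / N%:R)).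

Definition dft2 (N : nat) (x : 'M[C]_N) : 'M[C]_N :=
  \matrix_(k, l) \sum_(m < N) \sum_(n < N) x m n * twiddle N (k * m + l * n).

Definition idft2 (N : nat) (X : 'M[C]_N) : 'M[C]_N :=
  \matrix_(m, n) ((N%:R ^+ 2)^-1 *
     \sum_(k < N) \sum_(l < N) X k l * conjc (twiddle N (k * m + l * n))).

Definition proj_blk (M N : nat) (x : 'M[C]_N) : 'M[C]_N :=
  \matrix_(m, n) (if (m < M)%N && (n < M)%N then x m n else 0).

(* clip pixel values to [0,255] (the image is real: projection onto
   real pixels in [0,255]) *)
Definition clip255 (r : R) : R := Num.min (Num.max r 0) 255.

Definition clip_img (N : nat) (x : 'M[C]_N) : 'M[C]_N :=
  \matrix_(m, n) Complex (clip255 (Re (x m n))) 0.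

Definition Qop (M N : nat) (h : 'M[C]_N) : 'M[C]_N :=
  dft2 (clip_img (proj_blk M (idft2 h))).

Definition zero_pad (M N : nat) (g : 'M[R]_M) : 'M[C]_N :=
  \matrix_(m, n)
    match (insub (val m) : option 'I_M), (insub (val n) : option 'I_M) with
    | Some i, Some j => Complex (g i j) 0
    | _, _ => 0
    end.

Definition gtilde (M N : nat) (g : 'M[R]_M) : 'M[C]_N := dft2 (zero_pad N g).

Definition ind_half (b : bool) : R := (if b then 1 else 0) - 2^-1.

Definition Xtilde (M N : nat) (g : 'M[R]_M) (WR WI dR dI : 'M[R]_N) : 'M[C]_N :=
  \matrix_(k, l)
    Complex (ind_half (0 < Re (gtilde N g k l) + WR k l + dR k l))
            (ind_half (0 < Im (gtilde N g k l) + WI k l + dI k l)).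

Definition Zop (M N : nat) (F : R -> R) (gamma : R) (X : 'M[C]_N)
    (h : 'M[C]_N) : 'M[C]_N :=
  Qop M
    (\matrix_(k, l)
       Complex (gamma * Re (X k l) + Re (h k l) - gamma * (F (Re (h k l)) - 2^-1))
               (gamma * Im (X k l) + Im (h k l) - gamma * (F (Im (h k l)) - 2^-1))).

Definition in_Sc (N : nat) (h : 'M[C]_N) : Prop :=
  forall k l, `|Re (h k l)| <= sig_bound N /\ `|Im (h k l)| <= sig_bound N.

Definition frob_dist (N : nat) (h1 h2 : 'M[C]_N) : R :=
  Num.sqrt (\sum_(k < N) \sum_(l < N)
              ((Re (h1 k l - h2 k l)) ^+ 2 + (Im (h1 k l - h2 k l)) ^+ 2)).

End OneBitDefs.

(* Main.v *)
Require Import Defs.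
From HB Require Import structures.
From mathcomp Require Import all_boot all_order all_algebra.
From mathcomp Require Import all_classical all_reals all_analysis.
From mathcomp Require Import complex.
From mathcomp Require Import measurable_realfun.
From mathcomp Require Import ring lra zify.
Import Order.TTheory GRing.Theory Num.Theory.
Local Open Scope ring_scope.
Section Part0.
Local Open Scope classical_set_scope.
Definition cdfp {R : realType} (p : R -> R) (x : R) : R :=
  fine (\int[lebesgue_measure]_(t in `]-oo, x]) (p t)%:E)%E.
Lemma cdf_diff (R : realType) (p : R -> R) (mp : measurable_fun setT p)
  (p0 : forall x, 0 <= p x)
  (pint : (\int[lebesgue_measure]_x (p x)%:E <= 1)%E) (lo hi b a : R)
  (hba : b <= a) (lo0 : 0 <= lo) (hlo : forall t, b < t <= a -> lo <= p t)
  (hhi : forall t, b < t <= a -> p t <= hi) :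
  lo * (a - b) <= cdfp p a - cdfp p b <= hi * (a - b).
Proof.
have mpE : forall D : set R, measurable_fun D (EFin \o p).
  move=> D; apply/measurable_EFinP; exact: measurable_funTS mp.
have fin : forall D : set R, measurable D ->
    (\int[lebesgue_measure]_(t in D) (p t)%:E)%E \is a fin_num.
  move=> D mD; rewrite ge0_fin_numE; last by apply: integral_ge0 => x _; rewrite lee_fin.
  apply: (le_lt_trans _ (le_lt_trans pint (ltry 1))).
  apply: ge0_subset_integral => //; [exact: mpE | by move=> x _; rewrite lee_fin].
have setE : `]-oo, a] = `]-oo, b] `|` `]b, a] :> set R.
  by rewrite (@itv_bndbnd_setU _ _ -oo%O (BRight b) (BRight a)) // bnd_simp.
have dis : [disjoint (`]-oo, b] : set R) & `]b, a]]%classic.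
  apply/disj_setPS => x /= []; rewrite /= !in_itv /= => h1 /andP[h2 _].
  by move: (lt_le_trans h2 h1); rewrite ltxx.
have split : (\int[lebesgue_measure]_(t in `]-oo, a]) (p t)%:E =
   \int[lebesgue_measure]_(t in `]-oo, b]) (p t)%:E +
   \int[lebesgue_measure]_(t in `]b, a]) (p t)%:E)%E.
  rewrite setE ge0_integral_setU //; [by rewrite -setE; exact: mpE | by move=> x _; rewrite lee_fin].
have -> : cdfp p a - cdfp p b = fine (\int[lebesgue_measure]_(t in `]b, a]) (p t)%:E)%E.
  rewrite /cdfp split fineD ?fin //.
  by rewrite addrAC subrr add0r.

have leb : lebesgue_measure (`]b, a] : set R) = ((a - b)%:E)%E.
  rewrite lebesgue_measure_itv /= lte_fin; case: (ltP b a) => h.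
  - by rewrite EFinB.
  - have -> : a = b by apply/eqP; rewrite eq_le hba h.
    by rewrite subrr.
have J1 : ((lo * (a - b))%:E <= \int[lebesgue_measure]_(t in `]b, a]) (p t)%:E)%E.
  rewrite EFinM -leb -integral_cst //.
  apply: ge0_le_integral.
  - exact: measurable_itv.
  - by move=> x _; rewrite lee_fin.
  - exact: measurable_cst.
  - exact: mpE.
  - by move=> x /=; rewrite in_itv /= => hx; rewrite lee_fin; apply: hlo.
have J2 : (\int[lebesgue_measure]_(t in `]b, a]) (p t)%:E <= (hi * (a - b))%:E)%E.
  rewrite EFinM -leb -integral_cst //.
  apply: ge0_le_integral.
  - exact: measurable_itv.
  - by move=> x _; rewrite lee_fin.
  - exact: mpE.
  - exact: measurable_cst.
  - by move=> x /=; rewrite in_itv /= => hx; rewrite lee_fin; apply: hhi.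
have F := fin _ (measurable_itv `]b, a]%R).
rewrite -(fineK F) lee_fin in J1; rewrite -(fineK F) lee_fin in J2.
by rewrite J1 J2.
Qed.

End Part0.

Section Part1.
Local Open Scope classical_set_scope.
Section Pdf.
Variables (R : realType) (mu : probability R R) (sigma : R) (hs : 0 < sigma).
Let phi := normal_pdf 0 sigma.

Lemma phi_meas2 : measurable_fun setT (fun p : measurableTypeR R * R => (phi (p.1 - p.2))%:E).
Proof.
apply/measurable_EFinP; apply: measurableT_comp; first exact: measurable_normal_pdf.
exact: measurable_funB.
Qed.

Lemma phi_meas1 t : measurable_fun setT (fun w : R => (phi (t - w))%:E).
Proof.
apply/measurable_EFinP; apply: measurableT_comp; first exact: measurable_normal_pdf.
exact: measurable_funB.
Qed.

Lemma fE_bounds t : (0 <= \int[mu]_w (phi (t - w))%:E <= (normal_peak sigma)%:E)%E.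
Proof.
apply/andP; split.
  by apply: integral_ge0 => w _; rewrite lee_fin normal_pdf_ge0.
apply: (@le_trans _ _ (\int[mu]_w (cst (normal_peak sigma)%:E w))%E).
  apply: ge0_le_integral => //.
  - by move=> w _; rewrite lee_fin normal_pdf_ge0.
  - exact: phi_meas1.
  - by move=> w _; rewrite lee_fin normal_pdf_ub // gt_eqF.
rewrite integral_cst //; set m := (X in (_ * X)%E); have -> : m = 1%E by exact: probability_setT.
by rewrite mule1.
Qed.

Lemma pdfE t : (noise_pdf mu sigma t)%:E = (\int[mu]_w (phi (t - w))%:E)%E.
Proof.
have /andP[h1 h2] := fE_bounds t.
rewrite /noise_pdf fineK // ge0_fin_numE //.
exact: le_lt_trans h2 (ltry _).
Qed.

Lemma pdf_ge0 t : 0 <= noise_pdf mu sigma t.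
Proof. by have /andP[h1 _] := fE_bounds t; rewrite -lee_fin pdfE. Qed.

Lemma pdf_ub t : noise_pdf mu sigma t <= normal_peak sigma.
Proof. by have /andP[_ h2] := fE_bounds t; rewrite -lee_fin pdfE. Qed.

Lemma pdf_meas : measurable_fun setT (noise_pdf mu sigma).
Proof.
apply/measurable_EFinP.
have -> : EFin \o noise_pdf mu sigma = fubini_F mu (fun p : R * R => (phi (p.1 - p.2))%:E).
  by apply/funext => t /=; rewrite pdfE.
apply: measurable_fun_fubini_tonelli_F; first exact: phi_meas2.
by move=> x; rewrite lee_fin normal_pdf_ge0.
Qed.

Lemma pdf_int : (\int[lebesgue_measure]_t (noise_pdf mu sigma t)%:E = 1)%E.
Proof.
under eq_integral do rewrite pdfE.
transitivity (\int[mu]_y \int[lebesgue_measure]_x (phi (x - y))%:E)%E.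
  apply: (fubini_tonelli (fun p : measurableTypeR R * R => (phi (p.1 - p.2))%:E)).
    exact: phi_meas2.
  by move=> x; rewrite lee_fin normal_pdf_ge0.
transitivity (\int[mu]_y (cst 1%E y))%E.
  apply: eq_integral => y _.
  rewrite -(integral_normal_pdf y sigma); apply: eq_integral => x _.
  rewrite /phi /normal_pdf gt_eqF //= /normal_fun subr0 //.
rewrite integral_cst //; set m := (X in (_ * X)%E); have -> : m = 1%E by exact: probability_setT.
by rewrite mule1.
Qed.

Definition Ik (n : nat) : set R := `[- (n%:R : R), n%:R]%classic.

Lemma mu_pos : exists n : nat, (0 < mu (Ik n))%E.
Proof.
apply: contrapT => H.
have H0 : forall n : nat, mu (Ik n) = 0%E.
  move=> n; apply/eqP; rewrite eq_le measure_ge0 andbT leNgt; apply/negP => h.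
  by apply: H; exists n.
have cover : (setT `<=` \bigcup_n Ik n)%classic.
  move=> x _; exists (Num.trunc `|x|).+1 => //=.
  rewrite /Ik /= in_itv /= -ler_norml; exact/ltW/truncnS_gt.
have h := @measure_sigma_subadditive _ _ _ mu setT Ik (fun n => measurable_itv _) measurableT cover.
move: h; set m := (X in (X <= _)%E); have -> : m = 1%E by exact: probability_setT.
rewrite eseries0; last by move=> i _ _; exact: H0.
by rewrite lee_fin ler10.
Qed.

Lemma phi_gt0 x : 0 < phi x.
Proof.
rewrite /phi /normal_pdf gt_eqF //= mulr_gt0 ?normal_peak_gt0 ?gt_eqF //.
exact: expR_gt0.
Qed.

Lemma phi_mono x D : `|x| <= D -> phi D <= phi x.
Proof.
move=> hx; rewrite /phi /normal_pdf gt_eqF //=.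
rewrite ler_wpM2l ?normal_peak_ge0 // /normal_fun ler_expR !subr0 !mulNr lerN2.
rewrite ler_wpM2r // ?invr_ge0 ?mulrn_wge0 ?sqr_ge0 //.
have h0 : 0 <= D by apply: le_trans hx.
move: hx; rewrite ler_norml => /andP[h1 h2]; nra.
Qed.

Lemma pdf_lb (B : R) (hB : 0 <= B) :
  exists c, 0 < c /\ forall t, -B <= t <= B -> c <= noise_pdf mu sigma t.
Proof.
have [n hn] := mu_pos.
have mfin : mu (Ik n) \is a fin_num.
  rewrite ge0_fin_numE ?measure_ge0 //.
  apply: (@le_lt_trans _ _ 1%E); last exact: ltry.
  apply: (@le_trans _ _ (mu setT)); first by apply: le_measure => //; rewrite inE //; exact: measurable_itv.
  by rewrite probability_setT.
exists (phi (B + n%:R) * fine (mu (Ik n))); split.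
  rewrite mulr_gt0 ?phi_gt0 // -lte_fin fineK //.
move=> t /andP[ht1 ht2].
rewrite -lee_fin pdfE EFinM fineK //.
apply: (@le_trans _ _ (\int[mu]_(w in Ik n) (phi (t - w))%:E)%E); last first.
  apply: ge0_subset_integral => //; first exact: measurable_itv.
  - exact: phi_meas1.
  - by move=> w _; rewrite lee_fin normal_pdf_ge0.
rewrite -integral_cst; last exact: measurable_itv.
apply: ge0_le_integral; first exact: measurable_itv.
- by move=> w _; rewrite lee_fin ltW ?phi_gt0.
- exact: measurable_cst.
- exact: measurable_funTS (phi_meas1 t).
- move=> w; rewrite /Ik /= in_itv /= => /andP[hw1 hw2]; rewrite lee_fin.
  apply: phi_mono; rewrite ler_norml; apply/andP; split; lra.
Qed.
End Pdf.

End Part1.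

Section Part2.
Local Open Scope complex_scope.
Local Notation Re := (@complex.Re _).
Local Notation Im := (@complex.Im _).
Lemma conjcM {R : realType} (a b : R[i]) : conjc (a * b) = conjc a * conjc b.
Proof.
case: a => a1 a2; case: b => b1 b2 /=; apply/eqP; rewrite eq_complex /=; apply/andP; split; apply/eqP; ring.
Qed.

Lemma conjcD {R : realType} (a b : R[i]) : conjc (a + b) = conjc a + conjc b.
Proof.
case: a => a1 a2; case: b => b1 b2 /=; apply/eqP; rewrite eq_complex /=; apply/andP; split; apply/eqP; ring.
Qed.

Lemma conjc_sum {R : realType} (I : Type) (r : seq I) (P : pred I) (F : I -> R[i]) :
  conjc (\sum_(i <- r | P i) F i) = \sum_(i <- r | P i) conjc (F i).
Proof.
apply: (big_morph _ conjcD); rewrite /= oppr0 //.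
Qed.

Section Tw.
Variable R : realType.
Variable N : nat.
Hypothesis N0 : (0 < N)%N.
Local Notation tw := (@twiddle R N).

Lemma tw0 : tw 0 = 1.
Proof. by rewrite /twiddle mulr0 mul0r cos0 sin0 oppr0. Qed.

Lemma twD a b : tw (a + b) = tw a * tw b.
Proof.
rewrite /twiddle natrD mulrDr mulrDl cosD sinD /=.
congr Complex; ring.
Qed.

Lemma twN : tw N = 1.
Proof.
have hN : (N%:R : R) != 0 by rewrite pnatr_eq0 -lt0n.
rewrite /twiddle mulfK //.
have -> : 2 * pi = pi *+ 2 :> R by rewrite mulr_natl.
by rewrite cos2pi sin2pi oppr0.
Qed.

Lemma twX a n : tw (a * n) = tw a ^+ n.
Proof.
elim: n => [|n IH]; first by rewrite muln0 tw0 expr0.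
by rewrite mulnS twD IH exprS.
Qed.

Lemma twNm m : tw (N * m) = 1.
Proof. by rewrite twX twN expr1n. Qed.

Lemma twJ t : conjc (tw t) * tw t = 1.
Proof.
rewrite /twiddle /=; set x := 2 * pi * t%:R / N%:R.
have h := cos2Dsin2 x; move: h; move: (cos x) (sin x) => c s h.
apply/eqP; rewrite eq_complex /=; apply/andP; split; apply/eqP.
  by rewrite -[RHS]h; ring.
by ring.
Qed.

Lemma twmod j : tw j = tw (j %% N).
Proof.
by rewrite {1}(divn_eq j N) twD mulnC twNm mul1r.
Qed.

Lemma tw_ne1 r : (0 < r < N)%N -> tw r != 1.
Proof.
move=> /andP[r0 rN]; apply/negP => /eqP h.
have hN : (0 : R) < N%:R by rewrite ltr0n.
pose y : R := pi * r%:R / N%:R.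
have y0 : 0 < y by rewrite /y mulr_gt0 ?invr_gt0 ?mulr_gt0 ?ltr0n ?pi_gt0.
have ypi : y < pi.
  rewrite /y -mulrA gtr_pMr ?pi_gt0 // ltr_pdivrMr // mul1r ltr_nat //.
have hs : 0 < sin y by apply: sin_gt0_pi; rewrite y0 ypi.
move: h; rewrite /twiddle => /eqP; rewrite eq_complex /= => /andP[/eqP hc _].
have : cos (y *+ 2) = 1.
  by rewrite -hc /y mulr_natr mulr2n; congr cos; ring.
rewrite cos_mulr2n => /eqP; rewrite subr_eq -mulr2n => /eqP.
move=> h2.
have hc2 : cos y ^+ 2 = 1.
  by apply: (@mulIf _ 2); rewrite ?pnatr_eq0 // !mulr_natr h2.
have : `|cos y| = 1.
  by rewrite -(sqrtr_sqr (cos y)) hc2 sqrtr1.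
by move/cos1sin0 => hs0; move: hs; rewrite hs0 ltxx.
Qed.

Lemma twJ' b m : (b <= N)%N -> conjc (tw (b * m)) = tw ((N - b) * m).
Proof.
move=> hb.
have h1 := twJ (b * m).
have h2 : tw ((N - b) * m) * tw (b * m) = 1.
  by rewrite -twD -mulnDl subnK // twX twN expr1n.
rewrite -[LHS]mulr1 -h2 mulrA [_ * tw ((N - b) * m)]mulrC -mulrA h1 mulr1 //.
Qed.

Lemma geom0 (w : R[i]) : w ^+ N = 1 -> w != 1 -> \sum_(i < N) w ^+ i = 0.
Proof.
move=> hN h1; have := subrX1 w N; rewrite hN subrr => /esym/eqP.
by rewrite mulf_eq0 subr_eq0 (negbTE h1) /= => /eqP.
Qed.

Lemma orth1 (a b : 'I_N) :
  \sum_(m < N) tw (a * m) * conjc (tw (b * m)) = if a == b then N%:R else 0.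
Proof.
have hb : (b <= N)%N by apply: ltnW.
under eq_bigr do rewrite twJ' // -twD -mulnDl twX.
case: eqP => [->|hab].
  rewrite subnKC // twN; under eq_bigr do rewrite expr1n.
  by rewrite sumr_const card_ord.
apply: geom0; first by rewrite -twX mulnC twNm.
rewrite twmod; apply: tw_ne1.
have hab' : (a : nat) <> b by move=> h; apply: hab; apply: val_inj.
have ha := ltn_ord a; have hb' := ltn_ord b.
apply/andP; split; last by rewrite ltn_mod.
rewrite lt0n; apply/negP => /eqP h.
have : (N %| a + (N - b))%N by rewrite /dvdn h.
case/dvdnP => q hq.
have : q = 1%N by nia.
move=> hq1; rewrite hq1 mul1n in hq; lia.
Qed.

Lemma orth2 (q q' : 'I_N * 'I_N) :
  \sum_(p : 'I_N * 'I_N) tw (p.1 * q.1 + p.2 * q.2) * conjc (tw (p.1 * q'.1 + p.2 * q'.2))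
  = if q == q' then (N%:R ^+ 2) else 0.
Proof.
rewrite -(pair_bigA _ (fun (k l : 'I_N) => tw (k * q.1 + l * q.2) * conjc (tw (k * q'.1 + l * q'.2)))).
transitivity ((\sum_(k < N) tw (q.1 * k) * conjc (tw (q'.1 * k))) *
              (\sum_(l < N) tw (q.2 * l) * conjc (tw (q'.2 * l)))).
  rewrite mulr_suml; apply: eq_bigr => k _; rewrite mulr_sumr; apply: eq_bigr => l _.
  rewrite !twD conjcM (mulnC q.1) (mulnC q'.1) (mulnC q.2) (mulnC q'.2).
  by rewrite mulrACA.
rewrite !orth1; case: q q' => [a b] [c d] /=.
rewrite xpair_eqE; case: eqP => _; case: eqP => _ //=; rewrite ?mulr0 ?mul0r //.
Qed.
End Tw.

Definition sq {R : realType} (z : R[i]) : R := Re z ^+ 2 + Im z ^+ 2.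

Lemma sqE {R : realType} (z : R[i]) : z * conjc z = (sq z)%:C.
Proof.
case: z => a b; rewrite /sq /=; apply/eqP; rewrite eq_complex /=; apply/andP; split; apply/eqP; ring.
Qed.

Lemma sq_ge0 {R : realType} (z : R[i]) : 0 <= sq z.
Proof. by rewrite /sq addr_ge0 ?sqr_ge0. Qed.

Lemma parseval {R : realType} (I J : finType) (K : I -> J -> R[i]) (c : R) (x : J -> R[i]) :
  (forall j j', \sum_i K i j * conjc (K i j') = if j == j' then c%:C else 0) ->
  \sum_i sq (\sum_j x j * K i j) = c * \sum_j sq (x j).
Proof.
move=> hK; apply: (@complexI R).
rewrite rmorph_sum rmorphM rmorph_sum /=.
under eq_bigr do rewrite -sqE conjc_sum mulr_suml.
under eq_bigr do under eq_bigr do rewrite mulr_sumr.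
transitivity (\sum_j \sum_j' x j * conjc (x j') * \sum_i K i j * conjc (K i j')).
  rewrite exchange_big /=; apply: eq_bigr => j _.
  rewrite exchange_big /=; apply: eq_bigr => j' _.
  rewrite mulr_sumr; apply: eq_bigr => i _.
  by rewrite conjcM; ring.
rewrite mulr_sumr; apply: eq_bigr => j _.
under eq_bigr do rewrite hK.
rewrite (bigD1 j) //= eqxx big1 ?addr0; last by move=> j' /negbTE; rewrite eq_sym => ->; rewrite mulr0.
by rewrite sqE mulrC.
Qed.


Definition ssum {R : realType} {N : nat} (D : 'M[R[i]]_N) : R := \sum_k \sum_l sq (D k l).

Lemma ssum_pair {R : realType} {N : nat} (D : 'M[R[i]]_N) :
  ssum D = \sum_(p : 'I_N * 'I_N) sq (D p.1 p.2).
Proof. by rewrite /ssum pair_bigA. Qed.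

Lemma ssum_ge0 {R : realType} {N : nat} (D : 'M[R[i]]_N) : 0 <= ssum D.
Proof. by apply: sumr_ge0 => k _; apply: sumr_ge0 => l _; exact: sq_ge0. Qed.

Lemma dft2_pair {R : realType} {N : nat} (x : 'M[R[i]]_N) k l :
  dft2 x k l = \sum_(p : 'I_N * 'I_N) x p.1 p.2 * twiddle N (k * p.1 + l * p.2).
Proof. by rewrite mxE pair_bigA. Qed.

Lemma dft_norm {R : realType} {N : nat} (N0 : (0 < N)%N) (x : 'M[R[i]]_N) :
  ssum (dft2 x) = N%:R ^+ 2 * ssum x.
Proof.
rewrite !ssum_pair.
under eq_bigr do rewrite dft2_pair.
apply: (@parseval R _ _ (fun (q p : 'I_N * 'I_N) => twiddle N (q.1 * p.1 + q.2 * p.2))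
  _ (fun p => x p.1 p.2)) => j j'.
by rewrite orth2 // rmorphXn rmorph_nat.
Qed.

Lemma sqZ {R : realType} (a : R) (z : R[i]) : sq (a%:C * z) = a ^+ 2 * sq z.
Proof. case: z => x y; rewrite /sq /=; ring. Qed.

Lemma idft_norm {R : realType} {N : nat} (N0 : (0 < N)%N) (X : 'M[R[i]]_N) :
  ssum (idft2 X) = (N%:R ^+ 2)^-1 * ssum X.
Proof.
rewrite !ssum_pair.
have hN : (N%:R : R) != 0 by rewrite pnatr_eq0 -lt0n.
under eq_bigr do rewrite mxE.
have -> : (N%:R ^+ 2)^-1 = ((N%:R ^+ 2)^-1 : R)%:C :> R[i].
  by rewrite fmorphV rmorphXn rmorph_nat.
under eq_bigr do rewrite sqZ pair_bigA.
rewrite -mulr_sumr.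
rewrite (@parseval R _ _ (fun (i j : 'I_N * 'I_N) => conjc (twiddle N (j.1 * i.1 + j.2 * i.2)))
  (N%:R ^+ 2) (fun p => X p.1 p.2)).
  rewrite mulrA; congr (_ * _).
  by rewrite expr2 -mulrA mulVf ?mulr1 // expf_neq0.
move=> j j'.
under eq_bigr do rewrite conjcK mulrC (mulnC j.1) (mulnC j.2) (mulnC j'.1) (mulnC j'.2).
by rewrite orth2 // eq_sym rmorphXn rmorph_nat.
Qed.

Lemma dft2B {R : realType} {N : nat} (x y : 'M[R[i]]_N) : dft2 x - dft2 y = dft2 (x - y).
Proof.
apply/matrixP => k l; rewrite !mxE -sumrB; apply: eq_bigr => m _.
rewrite -sumrB; apply: eq_bigr => n _; by rewrite !mxE mulrBl.
Qed.

Lemma idft2B {R : realType} {N : nat} (x y : 'M[R[i]]_N) : idft2 x - idft2 y = idft2 (x - y).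
Proof.
apply/matrixP => k l; rewrite !mxE -mulrBr -sumrB; congr (_ * _); apply: eq_bigr => m _.
rewrite -sumrB; apply: eq_bigr => n _; by rewrite !mxE mulrBl.
Qed.

End Part2.

Section Part3.
Local Open Scope complex_scope.
Local Notation Re := (@complex.Re _).
Local Notation Im := (@complex.Im _).

Lemma ReB {R : realType} (a b : R[i]) : Re (a - b) = Re a - Re b.
Proof. by case: a => ? ?; case: b => ? ?. Qed.
Lemma ImB {R : realType} (a b : R[i]) : Im (a - b) = Im a - Im b.
Proof. by case: a => ? ?; case: b => ? ?. Qed.
Lemma ReD {R : realType} (a b : R[i]) : Re (a + b) = Re a + Re b.
Proof. by case: a => ? ?; case: b => ? ?. Qed.
Lemma ImD {R : realType} (a b : R[i]) : Im (a + b) = Im a + Im b.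
Proof. by case: a => ? ?; case: b => ? ?. Qed.
Lemma Re_sum {R : realType} (I : Type) (r : seq I) (P : pred I) (F : I -> R[i]) :
  Re (\sum_(i <- r | P i) F i) = \sum_(i <- r | P i) Re (F i).
Proof. by apply: (big_morph _ ReD). Qed.
Lemma Im_sum {R : realType} (I : Type) (r : seq I) (P : pred I) (F : I -> R[i]) :
  Im (\sum_(i <- r | P i) F i) = \sum_(i <- r | P i) Im (F i).
Proof. by apply: (big_morph _ ImD). Qed.

Lemma clipE {R : realType} (a : R) :
  clip255 a = if a < 0 then 0 else if a < 255 then a else 255.
Proof.
rewrite /clip255 /Order.max /Order.min.
have h : (0:R) < 255 by rewrite ltr0n.
have [h0|h0] := ltP a 0; first by rewrite h.
by [].
Qed.

Lemma clip_range {R : realType} (a : R) : 0 <= clip255 a <= 255.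
Proof.
rewrite clipE; have [h0|h0] := ltP a 0; last have [h1|h1] := ltP a 255; lra.
Qed.

Lemma sq_mono {R : realType} (u v : R) : 0 <= u <= v -> u ^+ 2 <= v ^+ 2.
Proof. move=> /andP[h1 h2]; nra. Qed.

Lemma clip_lip {R : realType} (a b : R) : (clip255 a - clip255 b) ^+ 2 <= (a - b) ^+ 2.
Proof.
have [hab|hab] := leP a b.
  rewrite -(sqrrN (clip255 a - clip255 b)) -(sqrrN (a - b)); apply: sq_mono.
  rewrite !clipE; have [h0|h0] := ltP a 0; last have [h1|h1] := ltP a 255;
  (have [h2|h2] := ltP b 0; last have [h3|h3] := ltP b 255); lra.
apply: sq_mono.
rewrite !clipE; have [h0|h0] := ltP a 0; last have [h1|h1] := ltP a 255;
  (have [h2|h2] := ltP b 0; last have [h3|h3] := ltP b 255); lra.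
Qed.

Lemma clip_ssum {R : realType} {N : nat} (x y : 'M[R[i]]_N) :
  ssum (clip_img x - clip_img y) <= ssum (x - y).
Proof.
apply: ler_sum => k _; apply: ler_sum => l _.
rewrite !mxE /sq ReB ImB /= subrr expr0n /= addr0.
apply: (le_trans (clip_lip _ _)).
by rewrite ReB lerDl sqr_ge0.
Qed.

Lemma proj_ssum {R : realType} {M N : nat} (x y : 'M[R[i]]_N) :
  ssum (proj_blk M x - proj_blk M y) <= ssum (x - y).
Proof.
apply: ler_sum => k _; apply: ler_sum => l _.
rewrite !mxE; case: ifP => _; first by [].
by rewrite subrr /sq /= expr0n /= addr0 sq_ge0.
Qed.

Lemma Q_nonexp {R : realType} {M N : nat} (N0 : (0 < N)%N) (a b : 'M[R[i]]_N) :
  ssum (Qop M a - Qop M b) <= ssum (a - b).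
Proof.
have hN : (N%:R : R) != 0 by rewrite pnatr_eq0 -lt0n.
rewrite /Qop dft2B dft_norm //.
apply: (@le_trans _ _ (N%:R ^+ 2 * ssum (idft2 a - idft2 b))).
  rewrite ler_wpM2l ?sqr_ge0 //.
  apply: (le_trans (clip_ssum _ _)); exact: proj_ssum.
rewrite idft2B idft_norm // mulrA mulfV ?mul1r // expf_neq0 //.
Qed.

Lemma frobE {R : realType} {N : nat} (h1 h2 : 'M[R[i]]_N) :
  frob_dist h1 h2 = Num.sqrt (ssum (h1 - h2)).
Proof.
rewrite /frob_dist /ssum; congr Num.sqrt; apply: eq_bigr => k _; apply: eq_bigr => l _.
by rewrite /sq !mxE.
Qed.

Lemma dft_clip_bound {R : realType} {N : nat} (y : 'M[R[i]]_N) k l :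
  `|Re (dft2 (clip_img y) k l)| <= sig_bound N /\ `|Im (dft2 (clip_img y) k l)| <= sig_bound N.
Proof.
have cb : forall a : R, `|clip255 a| <= 255.
  move=> a; have /andP[h1 h2] := clip_range a; by rewrite ger0_norm.
have E : sig_bound N = \sum_(m < N) \sum_(n < N) (255 : R).
  by rewrite /sig_bound !sumr_const card_ord -mulrnA -[_ *+ (N * N)]mulr_natr natrM expr2.
rewrite mxE Re_sum Im_sum E; split.
  apply: (le_trans (ler_norm_sum _ _ _)); apply: ler_sum => m _.
  rewrite Re_sum; apply: (le_trans (ler_norm_sum _ _ _)); apply: ler_sum => n _.
  rewrite !mxE /= mul0r subr0 normrM.
  rewrite -[255]mulr1; apply: ler_pM => //; exact: cos_max.
apply: (le_trans (ler_norm_sum _ _ _)); apply: ler_sum => m _.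
rewrite Im_sum; apply: (le_trans (ler_norm_sum _ _ _)); apply: ler_sum => n _.
rewrite !mxE /= mul0r addr0 normrM normrN.
rewrite -[255]mulr1; apply: ler_pM => //; exact: sin_max.
Qed.

End Part3.

Section Part9.
Local Open Scope complex_scope.
Local Notation Re := (@complex.Re _).
Local Notation Im := (@complex.Im _).

Lemma scal {R : realType} (F : R -> R) (c fm gamma B : R) (g0 : 0 < gamma)
 (hF : forall a b, -B <= b -> b <= a -> a <= B -> c*(a-b) <= F a - F b <= fm*(a-b))
 a b (ha : -B <= a <= B) (hb : -B <= b <= B) :
 ((a - b) - gamma * (F a - F b))^+2 <= (Num.max (1 - gamma*c) (gamma*fm - 1))^+2 * (a - b)^+2.
Proof.
set L := Num.max _ _.
have L1 : 1 - gamma * c <= L by rewrite le_max lexx.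
have L2 : gamma * fm - 1 <= L by rewrite le_max lexx orbT.
wlog hab : a b ha hb / b <= a.
  move=> H; case: (leP b a) => h; first exact: H.
  have := H b a hb ha (ltW h).
  rewrite -(sqrrN (b - a - _)) -(sqrrN (b - a)).
  have -> : -(b - a - gamma * (F b - F a)) = a - b - gamma * (F a - F b) by ring.
  by have -> : -(b - a) = a - b by ring.
move: ha hb => /andP[ha1 ha2] /andP[hb1 hb2].
have /andP[h1 h2] := hF a b hb1 hab ha2.
set d := a - b in h1 h2 *; set D := F a - F b in h1 h2 *.
have d0 : 0 <= d by rewrite /d subr_ge0.
have u1 : d - gamma * D <= L * d.
  apply: (@le_trans _ _ ((1 - gamma * c) * d)); last by rewrite ler_wpM2r.
  have : gamma * (c * d) <= gamma * D by rewrite ler_wpM2l // ltW.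
  lra.
have u2 : - (L * d) <= d - gamma * D.
  apply: (@le_trans _ _ (- ((gamma * fm - 1) * d))); first by rewrite lerN2 ler_wpM2r.
  have : gamma * D <= gamma * (fm * d) by rewrite ler_wpM2l // ltW.
  lra.
rewrite -exprMn; nra.
Qed.

Lemma inner_ssum {R : realType} {N : nat} (X : 'M[R[i]]_N) (F : R -> R) (gamma L : R)
  (h1 h2 : 'M[R[i]]_N) :
  (forall k l, ((Re (h1 k l) - Re (h2 k l)) - gamma * (F (Re (h1 k l)) - F (Re (h2 k l)))) ^+ 2
      <= L ^+ 2 * (Re (h1 k l) - Re (h2 k l)) ^+ 2) ->
  (forall k l, ((Im (h1 k l) - Im (h2 k l)) - gamma * (F (Im (h1 k l)) - F (Im (h2 k l)))) ^+ 2
      <= L ^+ 2 * (Im (h1 k l) - Im (h2 k l)) ^+ 2) ->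
  ssum ((\matrix_(k, l)
       Complex (gamma * Re (X k l) + Re (h1 k l) - gamma * (F (Re (h1 k l)) - 2^-1))
               (gamma * Im (X k l) + Im (h1 k l) - gamma * (F (Im (h1 k l)) - 2^-1))) -
        (\matrix_(k, l)
       Complex (gamma * Re (X k l) + Re (h2 k l) - gamma * (F (Re (h2 k l)) - 2^-1))
               (gamma * Im (X k l) + Im (h2 k l) - gamma * (F (Im (h2 k l)) - 2^-1))))
  <= L ^+ 2 * ssum (h1 - h2).
Proof.
move=> HR HI.
rewrite /ssum mulr_sumr; apply: ler_sum => k _; rewrite mulr_sumr; apply: ler_sum => l _.
rewrite !mxE /sq !ReB !ImB.
move: (Re (X k l)) (Im (X k l)) (HR k l) (HI k l) => x y.
move: (Re (h1 k l)) (Re (h2 k l)) (Im (h1 k l)) (Im (h2 k l)) => a1 a2 b1 b2 /= hr hi.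
rewrite [X in _ <= X]mulrDr; apply: lerD.
  have -> : gamma * x + a1 - gamma * (F a1 - 2^-1) -
     (gamma * x + a2 - gamma * (F a2 - 2^-1)) =
     a1 - a2 - gamma * (F a1 - F a2) by ring.
  exact: hr.
have -> : gamma * y + b1 - gamma * (F b1 - 2^-1) -
   (gamma * y + b2 - gamma * (F b2 - 2^-1)) =
   b1 - b2 - gamma * (F b1 - F b2) by ring.
exact: hi.
Qed.

Lemma pdf_le_fmax {R : realType} (mu : probability R R) (sigma : R) (hs : 0 < sigma) (N : nat) t :
  - sig_bound N <= t <= sig_bound N -> noise_pdf mu sigma t <= f_max mu sigma N.
Proof.
move=> ht; rewrite /f_max; apply: ub_le_sup.
  exists (normal_peak sigma) => _ [x _ <-]; exact: pdf_ub.
by exists t => //=; rewrite in_itv /=.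
Qed.


End Part9.

Theorem lemma5 (R : realType) (M N : nat) (hM : (0 < M)%N) (hMN : (2 * M < N)%N)
    (g : 'M[R]_M) (hg : forall i j, 0 <= g i j <= 255)
    (mu : probability R R) (hsym : symmetric_distribution mu) (hmean : zero_mean mu)
    (sigma : R) (hsigma : 0 < sigma)
    (WR WI dR dI : 'M[R]_N)
    (gamma : R) (hgamma0 : 0 < gamma) (hgamma1 : gamma < 2 / f_max mu sigma N) :
  let Z := Zop M (noise_cdf mu sigma) gamma (Xtilde g WR WI dR dI) in
  (forall h, in_Sc h -> in_Sc (Z h)) /\
  exists L : R, 0 <= L < 1 /\
    forall h1 h2, in_Sc h1 -> in_Sc h2 ->
      frob_dist (Z h1) (Z h2) <= L * frob_dist h1 h2.
Proof.
move=> Z.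
have N0 : (0 < N)%N by lia.
pose B := sig_bound N : R.
have B0 : 0 <= B by rewrite /B /sig_bound mulr_ge0 // sqr_ge0.
have [c [c0 hc]] := @pdf_lb _ mu sigma hsigma B B0.
pose fm := f_max mu sigma N.
have hfm : forall t, -B <= t <= B -> noise_pdf mu sigma t <= fm.
  by move=> t ht; apply: pdf_le_fmax.
have h00 : -B <= 0 <= B by rewrite oppr_le0 B0.
have cfm : c <= fm by apply: le_trans (hc 0 h00) (hfm 0 h00).
have fm0 : 0 < fm by apply: lt_le_trans cfm.
have gfm : gamma * fm < 2 by rewrite -ltr_pdivlMr.
have hF : forall a b, -B <= b -> b <= a -> a <= B ->
    c * (a - b) <= noise_cdf mu sigma a - noise_cdf mu sigma b <= fm * (a - b).
  move=> a b h1 h2 h3.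
  apply: (@cdf_diff _ (noise_pdf mu sigma) (@pdf_meas _ mu sigma hsigma) (@pdf_ge0 _ mu sigma hsigma) _ c fm b a h2 (ltW c0)).
  - by rewrite pdf_int.
  - move=> t /andP[t1 t2]; apply: hc; apply/andP; split.
      by apply: le_trans h1 (ltW t1).
    exact: le_trans t2 h3.
  - move=> t /andP[t1 t2]; apply: hfm; apply/andP; split.
      by apply: le_trans h1 (ltW t1).
    exact: le_trans t2 h3.
pose L := Num.max (1 - gamma * c) (gamma * fm - 1).
split.
  by move=> h _ k l; exact: dft_clip_bound.
exists L; split.
  apply/andP; split.
    rewrite le_max; case: (leP (gamma * c) 1) => h.
      by rewrite subr_ge0 h.
    apply/orP; right; rewrite subr_ge0.
    apply: le_trans (ltW h) _; rewrite ler_wpM2l // ltW //.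
  rewrite gt_max; apply/andP; split.
    by rewrite ltrBlDr ltrDl mulr_gt0.
  by rewrite ltrBlDr.
move=> h1 h2 H1 H2; rewrite !frobE.
have key : ssum (Z h1 - Z h2) <= L ^+ 2 * ssum (h1 - h2).
  apply: le_trans (Q_nonexp N0 _ _) _.
  apply: inner_ssum => k l.
    have [r1 _] := H1 k l; have [r2 _] := H2 k l.
    move: r1 r2; rewrite !ler_norml => r1 r2.
    exact: (@scal R (noise_cdf mu sigma) c fm gamma B hgamma0 hF _ _ r1 r2).
  have [_ r1] := H1 k l; have [_ r2] := H2 k l.
  move: r1 r2; rewrite !ler_norml => r1 r2.
  exact: (@scal R (noise_cdf mu sigma) c fm gamma B hgamma0 hF _ _ r1 r2).
apply: le_trans (ler_wsqrtr key) _.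
have L0 : 0 <= L.
  rewrite le_max; case: (leP (gamma * c) 1) => h.
    by rewrite subr_ge0 h.
  apply/orP; right; rewrite subr_ge0.
  apply: le_trans (ltW h) _; rewrite ler_wpM2l // ltW //.
by rewrite sqrtrM ?sqr_ge0 // sqrtr_sqr ger0_norm.
Qed.
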